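(* There is an absolute constant $C$ such that for all positive integers $n$, $$M_{\mathrm{Schur}}(n,3)\le \frac{n^2}{67}+Cn \qquad\text{and}\qquad M_{\mathrm{Schur}}(n,4)\le \frac{n^2}{496}+Cn .$$ (The bound for 3 colors is attained, up to $O(n)$, by the coloring that colors consecutive blocks of $[n]$ of lengths $\frac{10n}{67},\frac{14n}{67},\frac{2n}{67},\frac{28n}{67},\frac{n}{67},\frac{11n}{67},\frac{n}{67}$ with colors $0,1,0,2,0,1,0$ respectively; the bound for 4 colors by consecutive blocks of lengths $\frac{e_i n}{496}$ with $(e_i)=(28,38,5,75,2,30,2,182,1,29,1,72,1,29,1)$ and colors $0,1,0,2,0,1,0,3,0,1,0,2,0,1,0$.)
   Context: For a positive integer $n$ write $[n]=\{1,\dots,n\}$. A $k$-coloring of $[n]$ is a map $\chi:[n]\to\{0,\dots,k-1\}$. A Schur triple is an ordered triple $(x,y,z)\in[n]^3$ with $x+y=z$ (so $(x,y,z)$ and $(y,x,z)$ with $x\neq y$ are counted separately); it is monochromatic if $\chi(x)=\chi(y)=\chi(z)$. $M_{\mathrm{Schur}}(n,k)$ is the minimum over all $k$-colorings of $[n]$ of the number of monochromatic Schur triples. *)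

(* Defs.v *)
From mathcomp Require Import all_boot all_order all_algebra.
Set Implicit Arguments. Unset Strict Implicit. Unset Printing Implicit Defensive.

(* A k-coloring of [n] = {1..n} is represented as chi : {ffun 'I_n -> 'I_k},
   where element x of [n] (1 <= x <= n) has color chi (x-1). *)

Definition col (n k : nat) (chi : {ffun 'I_n -> 'I_k}) (x : nat) : option 'I_k :=
  match insub x.-1 with
  | Some i => if 0 < x then Some (chi i) else None
  | None => None
  end.

Definition schur_count (n k : nat) (chi : {ffun 'I_n -> 'I_k}) : nat :=
  \sum_(1 <= x < n.+1) \sum_(1 <= y < n.+1)
     [&& x + y <= n, col chi x == col chi y & col chi y == col chi (x + y)].

(* The seed n*n of the
   fold is an upper bound for every schur_count (at most n*n pairs), so for
   k >= 1 (colorings exist) this is exactly the minimum. *)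
Definition M_Schur (n k : nat) : nat :=
  \big[minn/(n * n)]_(chi : {ffun 'I_n -> 'I_k}) schur_count chi.

(* Main.v *)
Require Import Defs.
From mathcomp Require Import all_boot all_order all_algebra.
Import Order.TTheory GRing.Theory Num.Theory.
Local Open Scope ring_scope.
From mathcomp Require Import zify ring lra.
Local Close Scope ring_scope.

Lemma bigminn_le (I : finType) (F : I -> nat) x i0 : \big[minn/x]_(i : I) F i <= F i0.
Proof.
have : i0 \in index_enum I by rewrite mem_index_enum.
elim: (index_enum I) => [|j s IH] //=.
rewrite big_cons in_cons; case/orP=> [/eqP->|/IH]; first exact: geq_minl.
by move=> H; apply: leq_trans (geq_minr _ _) H.
Qed.

Lemma sum_le_ext (F : nat -> nat) n N : n <= N ->
  \sum_(0 <= u < n) F u <= \sum_(0 <= u < N) F u.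
Proof. by move=> h; rewrite [X in _ <= X](@big_cat_nat _ _ _ n) //=; apply: leq_addr. Qed.

Lemma sum_split (F : nat -> nat) m t :
  \sum_(0 <= u < m * t) F u = \sum_(0 <= i < m) \sum_(0 <= a < t) F (i * t + a).
Proof.
elim: m => [|m IH]; first by rewrite mul0n !big_geq.
rewrite big_nat_recr //= -IH mulSn addnC.
rewrite (@big_cat_nat _ _ _ (m * t)) //=; last exact: leq_addr. congr (_ + _).
rewrite -{1}(add0n (m * t)) big_addn addKn.
by apply: eq_bigr => a _; rewrite addnC.
Qed.

Definition G (m : nat) (c : nat -> nat) i j e :=
  [&& i + j + e < m, c i == c j & c j == c (i + j + e)].
Definition Fc (N t : nat) (c : nat -> nat) u v :=
  [&& u + v + 1 < N, c (u %/ t) == c (v %/ t) & c (v %/ t) == c ((u + v + 1) %/ t)].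

Lemma Fc_block m t c i j a b : 0 < t -> a < t -> b < t ->
  Fc (m * t) t c (i * t + a) (j * t + b) = G m c i j ((a + b + 1) %/ t).
Proof.
move=> t0 ha hb; rewrite /Fc.
have -> : i * t + a + (j * t + b) + 1 = (i + j) * t + (a + b + 1).
  by rewrite mulnDl; lia.
by rewrite /Fc /G -ltn_divLR // !divnMDl // (divn_small ha) (divn_small hb) !addn0.
Qed.

Lemma inner_sum m c i j t : 0 < t ->
  \sum_(0 <= a < t) \sum_(0 <= b < t) G m c i j ((a + b + 1) %/ t) =
  G m c i j 0 * \sum_(0 <= a < t) \sum_(0 <= b < t) ((a + b + 1) %/ t == 0)
  + G m c i j 1 * \sum_(0 <= a < t) \sum_(0 <= b < t) ((a + b + 1) %/ t != 0).
Proof.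
move=> t0; rewrite !big_distrr -big_split /=.
rewrite big_nat [RHS]big_nat; apply: eq_bigr => a /andP[_ ha].
rewrite !big_distrr -big_split /=.
rewrite big_nat [RHS]big_nat; apply: eq_bigr => b /andP[_ hb].
have : (a + b + 1) %/ t < 2 by rewrite ltn_divLR //; lia.
by case: ((a + b + 1) %/ t) => [|[|]] //=; rewrite ?muln1 ?muln0 ?addn0.
Qed.

Lemma count_eq m t c : 0 < t ->
  \sum_(0 <= u < m * t) \sum_(0 <= v < m * t) Fc (m * t) t c u v =
  (\sum_(0 <= i < m) \sum_(0 <= j < m) G m c i j 0) *
    \sum_(0 <= a < t) \sum_(0 <= b < t) ((a + b + 1) %/ t == 0)
  + (\sum_(0 <= i < m) \sum_(0 <= j < m) G m c i j 1) *
    \sum_(0 <= a < t) \sum_(0 <= b < t) ((a + b + 1) %/ t != 0).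
Proof.
move=> t0; rewrite sum_split.
rewrite !big_distrl -big_split /=.
apply: eq_bigr => i _.
under eq_bigr do rewrite sum_split.
rewrite exchange_big_nat /=.
rewrite !big_distrl -big_split /=.
apply: eq_bigr => j _.
rewrite -inner_sum //.
rewrite big_nat [RHS]big_nat; apply: eq_bigr => a /andP[_ ha].
rewrite big_nat [RHS]big_nat; apply: eq_bigr => b /andP[_ hb].
by rewrite Fc_block.
Qed.

Lemma div_eq0 x t : 0 < t -> (x %/ t == 0) = (x < t).
Proof. move=> t0; have -> : (x < t) = (x < 1 * t) by rewrite mul1n.
by rewrite -ltn_divLR // ltnS leqn0. Qed.

Lemma L_le t : 0 < t ->
  \sum_(0 <= a < t) \sum_(0 <= b < t) ((a + b + 1) %/ t == 0) <=
  \sum_(0 <= a < t) \sum_(0 <= b < t) ((a + b + 1) %/ t != 0).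
Proof.
move=> t0; rewrite big_nat_rev big_nat [X in _ <= X]big_nat.
apply: leq_sum => a /andP[_ ha].
rewrite big_nat_rev big_nat [X in _ <= X]big_nat.
apply: leq_sum => b /andP[_ hb].
rewrite !div_eq0 //.
case: ltnP => h1; case: ltnP => h2 //=; lia.
Qed.

Lemma L_sum t :
  \sum_(0 <= a < t) \sum_(0 <= b < t) ((a + b + 1) %/ t == 0)
  + \sum_(0 <= a < t) \sum_(0 <= b < t) ((a + b + 1) %/ t != 0) = t * t.
Proof.
rewrite -big_split /=.
under eq_bigr do rewrite -big_split /=.
under eq_bigr do under eq_bigr do rewrite addnC addn_negb.
by rewrite !sum_nat_const_nat subn0 muln1.
Qed.

Lemma col_eq n k (chi : {ffun 'I_n -> 'I_k}) w (h : w < n) :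
  Defs.col chi w.+1 = Some (chi (Ordinal h)).
Proof. rewrite /Defs.col /=; case: insubP => [i _ e|]; last by rewrite h.
by congr (Some (chi _)); apply: val_inj. Qed.

Definition chiF n k t (c : nat -> nat) : {ffun 'I_n -> 'I_k.+1} :=
  [ffun u : 'I_n => inord (c (u %/ t))].

Lemma schur_le n k t m (c : nat -> nat) : 0 < t -> n <= m * t ->
  (forall i, c i <= k) ->
  schur_count (chiF n k t c) <=
  \sum_(0 <= u < m * t) \sum_(0 <= v < m * t) Fc (m * t) t c u v.
Proof.
move=> t0 hn ck.
apply: leq_trans (_ : \sum_(0 <= u < n) \sum_(0 <= v < m * t) Fc (m * t) t c u v <= _);
  last exact: sum_le_ext.
rewrite /schur_count big_add1 /= big_nat [X in _ <= X]big_nat.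
apply: leq_sum => u /andP[_ hu].
rewrite big_add1 /=.
apply: leq_trans (_ : \sum_(0 <= v < n) Fc (m * t) t c u v <= _);
  last exact: sum_le_ext.
rewrite big_nat [X in _ <= X]big_nat.
apply: leq_sum => v /andP[_ hv].
have [huv|] := leqP (u.+1 + v.+1) n; last by [].
have hw : u + v + 1 < n by lia.
have -> : u.+1 + v.+1 = (u + v + 1).+1 by lia.
rewrite (col_eq _ _ _ _ hu) (col_eq _ _ _ _ hv) (col_eq _ _ _ _ hw) /= !ffunE /=.
rewrite /Fc (leq_trans hw hn) /=.
have SE (x y : 'I_k.+1) : (Some x == Some y) = (x == y) by [].
have IE x y : x <= k -> y <= k -> (inord x == inord y :> 'I_k.+1) = (x == y).
  move=> hx hy; apply/eqP/eqP => [/(congr1 val)|->//].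
  by rewrite /= !inordK ?ltnS.
by rewrite !SE !IE.
Qed.


Definition s3 := nseq 10 0 ++ nseq 14 1 ++ nseq 2 0 ++ nseq 28 2 ++ nseq 1 0 ++ nseq 11 1 ++ nseq 1 0.
Definition c3 i := minn (nth 0 s3 i) 2.
Lemma A3 : \sum_(0<=i<67)\sum_(0<=j<67) G 67 c3 i j 0 = 80.
Proof. rewrite unlock; vm_cast_no_check (erefl 80). Qed.
Definition s4 := nseq 28 0 ++ nseq 38 1 ++ nseq 5 0 ++ nseq 75 2 ++ nseq 2 0 ++ nseq 30 1 ++ nseq 2 0 ++ nseq 182 3 ++ nseq 1 0 ++ nseq 29 1 ++ nseq 1 0 ++ nseq 72 2 ++ nseq 1 0 ++ nseq 29 1 ++ nseq 1 0.
Definition c4 i := minn (nth 0 s4 i) 3.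
Lemma A4 : \sum_(0<=i<496)\sum_(0<=j<496) G 496 c4 i j 0 = 536.
Proof. rewrite unlock; vm_cast_no_check (erefl 536). Qed.

Lemma B3 : \sum_(0<=i<67)\sum_(0<=j<67) G 67 c3 i j 1 = 54.
Proof. rewrite unlock; vm_cast_no_check (erefl 54). Qed.
Lemma B4 : \sum_(0<=i<496)\sum_(0<=j<496) G 496 c4 i j 1 = 456.
Proof. rewrite unlock; vm_cast_no_check (erefl 456). Qed.


Lemma gen_bound m k (c : nat -> nat) A B n : 0 < m -> 0 < n ->
  (forall i, c i <= k) -> B <= A -> A + B = 2 * m ->
  \sum_(0 <= i < m) \sum_(0 <= j < m) G m c i j 0 = A ->
  \sum_(0 <= i < m) \sum_(0 <= j < m) G m c i j 1 = B ->
  M_Schur n k.+1 * m <= (n + m) ^ 2.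
Proof.
move=> m0 n0 ck BA AB HA HB.
set t := n %/ m + 1.
have t0 : 0 < t by rewrite /t addn1.
have hn : n <= m * t by rewrite /t mulnC addn1 ltnW // ltn_ceil.
have hmt : m * t <= n + m by rewrite /t mulnDr muln1 leq_add2r mulnC leq_trunc_div.
have h1 := schur_le n k t m c t0 hn ck.
rewrite count_eq // HA HB in h1.
have hL := L_le t t0.
have hS := L_sum t.
set L := \sum_(0 <= a < t) \sum_(0 <= b < t) ((a + b + 1) %/ t == 0) in hL hS h1.
set L' := \sum_(0 <= a < t) \sum_(0 <= b < t) ((a + b + 1) %/ t != 0) in hL hS h1.
have h2 : M_Schur n k.+1 <= m * t * t.
  rewrite /M_Schur; apply: leq_trans (bigminn_le ({ffun 'I_n -> 'I_k.+1} : finType) (@schur_count n k.+1) (n * n) (chiF n k t c)) _.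
  apply: leq_trans h1 _.
  have : 2 * (A * L + B * L') <= (A + B) * (L + L') by nia.
  rewrite AB hS; nia.
have h3 : m * t * t * m <= (n + m) ^ 2.
  have : m * t * (m * t) <= (n + m) * (n + m) by apply: leq_mul.
  by rewrite expnS expn1; nia.
apply: leq_trans h3; by rewrite leq_mul2r h2 orbT.
Qed.

Local Open Scope ring_scope.
Lemma rat_bound (M n m : nat) : (0 < m)%N -> (0 < n)%N -> (m <= 496)%N -> (M * m <= (n + m) ^ 2)%N ->
  (M%:R : rat) <= (n ^ 2)%:R / m%:R + 498%:R * n%:R.
Proof.
move=> m0 n0 m496 h.
have hm : (0 : rat) < m%:R by rewrite ltr0n.
have hn : (1 : rat) <= n%:R by rewrite ler1n.
have hm' : (m%:R : rat) <= 496 by rewrite (ler_nat rat m 496).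
move: h; rewrite -(ler_nat rat) natrM natrX natrD natrX => h.
have h' : M%:R <= (n%:R + m%:R) ^+ 2 / (m%:R : rat) by rewrite ler_pdivlMr.
have e : (n%:R + m%:R) ^+ 2 / (m%:R : rat) = n%:R ^+ 2 / m%:R + 2 * n%:R + m%:R.
  by field; rewrite lt0r_neq0.
rewrite e in h'; lra.
Qed.

Theorem theorem7 :
  exists C : rat, forall n : nat, (0 < n)%N ->
    (M_Schur n 3)%:R <= (n ^ 2)%:R / 67%:R + C * n%:R /\
    (M_Schur n 4)%:R <= (n ^ 2)%:R / 496%:R + C * n%:R.
Proof.
exists 498%:R => n n0; split.
- apply: rat_bound => //.
  apply: (gen_bound 67 2 c3 80 54 n) => //; last exact: B3; last exact: A3.
  by move=> i; apply: geq_minr.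
- apply: rat_bound => //.
  apply: (gen_bound 496 3 c4 536 456 n) => //; last exact: B4; last exact: A4.
  by move=> i; apply: geq_minr.
Qed.
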